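(* Let $F:\mathbb{R}^n\to\mathbb{R}$ be convex and $1$-smooth, let $x^\star$ be a minimizer of $F$ and $F^\star=F(x^\star)$. Let $k\ge1$, $N=2^k-1$, and let $(h_0,\dots,h_{N-1})=\pi_k$ be the silver stepsize schedule. For $x^0\in\mathbb{R}^n$ and $x^{i+1}=x^i-h_i\nabla F(x^i)$, $i=0,\dots,N-1$, we have $$F(x^N)-F^\star\le\frac{1}{4\rho^k-2}\,\|x^0-x^\star\|^2,$$ where $\rho=1+\sqrt2$.
   Context: A differentiable convex function $F$ is $1$-smooth if $\nabla F$ is $1$-Lipschitz. The silver ratio is $\rho=1+\sqrt2$. The silver stepsize schedule $\pi_k\in\mathbb{R}^{2^k-1}$ is defined recursively by $\pi_1=(\sqrt2)$ and $\pi_{k+1}=(\pi_k,\ 1+\rho^{k-1},\ \pi_k)$ (concatenation). *)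

(* Defs.v *)
From HB Require Import structures.
From mathcomp Require Import all_boot all_order all_algebra.
From mathcomp Require Import all_classical all_reals all_analysis.
Set Implicit Arguments. Unset Strict Implicit. Unset Printing Implicit Defensive.
Import Order.TTheory GRing.Theory Num.Theory.
Import numFieldNormedType.Exports.
Local Open Scope ring_scope.

Definition dotv {R : realType} {n : nat} (u v : 'rV[R]_n) : R :=
  \sum_(i < n) u ord0 i * v ord0 i.
Definition enorm {R : realType} {n : nat} (u : 'rV[R]_n) : R :=
  Num.sqrt (dotv u u).

Definition silver_ratio {R : realType} : R := 1 + Num.sqrt 2.

Fixpoint silver_schedule {R : realType} (k : nat) : seq R :=
  match k with
  | 0%N => [::]
  | 1%N => [:: Num.sqrt 2]
  | k'.+1 => silver_schedule k' ++ (1 + silver_ratio ^+ k'.-1) :: silver_schedule k'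
  end.

Definition has_gradient {R : realType} {n : nat}
  (F : 'rV[R]_n -> R) (gF : 'rV[R]_n -> 'rV[R]_n) : Prop :=
  forall x, differentiable F x /\ forall v, 'd F x v = dotv v (gF x).

Definition convex_fun {R : realType} {n : nat} (F : 'rV[R]_n -> R) : Prop :=
  forall (x y : 'rV[R]_n) (t : R), 0 <= t <= 1 ->
    F ((1 - t) *: x + t *: y) <= (1 - t) * F x + t * F y.

Definition one_smooth {R : realType} {n : nat} (gF : 'rV[R]_n -> 'rV[R]_n) : Prop :=
  forall x y, enorm (gF x - gF y) <= enorm (x - y).

Fixpoint gd_iter {R : realType} {n : nat} (gF : 'rV[R]_n -> 'rV[R]_n)
  (hs : seq R) (x0 : 'rV[R]_n) (i : nat) : 'rV[R]_n :=
  match i with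
  | 0%N => x0
  | i'.+1 => let x := gd_iter gF hs x0 i' in x - nth 0 hs i' *: gF x
  end.

(* Main.v *)
Require Import Defs.
From HB Require Import structures.
From mathcomp Require Import all_boot all_order all_algebra.
From mathcomp Require Import all_classical all_reals all_analysis.
From mathcomp Require Import ring lra zify.
Import Order.TTheory GRing.Theory Num.Theory.
Import numFieldNormedType.Exports.
Local Open Scope ring_scope.

Section Dot.
Variables (R : realType) (n : nat).
Implicit Types (u v w : 'rV[R]_n).

Lemma dotvC u v : dotv u v = dotv v u.
Proof. by rewrite /dotv; apply: eq_bigr => i _; rewrite mulrC. Qed.

Lemma dotvDl u v w : dotv (u + v) w = dotv u w + dotv v w.
Proof. by rewrite /dotv -big_split /=; apply: eq_bigr => i _; rewrite !mxE mulrDl. Qed.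

Lemma dotvZl a u w : dotv (a *: u) w = a * dotv u w.
Proof. by rewrite /dotv mulr_sumr; apply: eq_bigr => i _; rewrite !mxE mulrA. Qed.

Lemma dotvNl u w : dotv (- u) w = - dotv u w.
Proof. by rewrite -scaleN1r dotvZl mulN1r. Qed.

Lemma dotvBl u v w : dotv (u - v) w = dotv u w - dotv v w.
Proof. by rewrite dotvDl dotvNl. Qed.

Lemma dotvDr u v w : dotv w (u + v) = dotv w u + dotv w v.
Proof. by rewrite dotvC dotvDl !(dotvC w). Qed.
Lemma dotvZr a u w : dotv w (a *: u) = a * dotv w u.
Proof. by rewrite dotvC dotvZl dotvC. Qed.
Lemma dotvNr u w : dotv w (- u) = - dotv w u.
Proof. by rewrite dotvC dotvNl dotvC. Qed.
Lemma dotvBr u v w : dotv w (u - v) = dotv w u - dotv w v.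
Proof. by rewrite dotvDr dotvNr. Qed.
Lemma dotv0l w : dotv 0 w = 0.
Proof. by rewrite -(scale0r 0) dotvZl mul0r. Qed.
Lemma dotv0r w : dotv w 0 = 0.
Proof. by rewrite dotvC dotv0l. Qed.

Lemma dotvv_ge0 u : 0 <= dotv u u.
Proof. by rewrite /dotv; apply: sumr_ge0 => i _; rewrite -expr2 sqr_ge0. Qed.

Lemma dotvv_eq0 u : dotv u u = 0 -> u = 0.
Proof.
move=> h; apply/rowP => i; rewrite mxE.
have /eqP := h; rewrite /dotv psumr_eq0 => [/allP H|j _]; last by rewrite -expr2 sqr_ge0.
have := H i (mem_index_enum _); rewrite /= mulf_eq0 orbb => /eqP.
done.
Qed.

Lemma enorm_sq u : enorm u ^+ 2 = dotv u u.
Proof. by rewrite /enorm sqr_sqrtr // dotvv_ge0. Qed.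

End Dot.
Arguments dotvC {R n}.
Arguments dotvDl {R n}.
Arguments dotvZl {R n}.
Arguments dotvNl {R n}.
Arguments dotvBl {R n}.
Arguments dotvDr {R n}.
Arguments dotvZr {R n}.
Arguments dotvNr {R n}.
Arguments dotvBr {R n}.
Arguments dotv0l {R n}.
Arguments dotv0r {R n}.
Arguments dotvv_ge0 {R n}.
Arguments dotvv_eq0 {R n}.
Arguments enorm_sq {R n}.

Section Analytic.
Variables (R : realType) (n : nat) (F : 'rV[R]_n -> R) (gF : 'rV[R]_n -> 'rV[R]_n).
Hypothesis hg : has_gradient F gF.

Lemma line_is_derive (y d : 'rV[R]_n) (t : R) :
  is_derive t 1 (fun s : R => F (y + s *: d)) (dotv d (gF (y + t *: d))).
Proof.
set p := y + t *: d.
have E : (fun h : R => h^-1 *: (((fun s : R => F (y + s *: d)) \o shift t) (h *: 1)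
            - F (y + t *: d)))
       = (fun h : R => h^-1 *: ((F \o shift p) (h *: d) - F p)).
  apply: funext => h /=; rewrite /p; congr (_ *: (F _ - _)).
  rewrite [h *: 1]mulr1 scalerDl; rewrite addrCA addrC; done.
have [dF dFv] := hg p.
apply: DeriveDef.
  have := @diff_derivable _ _ _ F p d dF; rewrite /derivable -E; done.
by rewrite /derive E -/(derive F p d) deriveE // dFv.
Qed.


Lemma mvt_phi (y d : 'rV[R]_n) (s : R) :
  exists2 xi, xi \in `]0, 1[%R &
  F (y + d) - F y - dotv d (gF y) - s * (dotv d d / 2)
   = dotv d (gF (y + xi *: d)) - dotv d (gF y) - s * dotv d d * xi.
Proof.
set c := dotv d (gF y); set e := dotv d d.
have h2 (t : R) : is_derive t (1:R) (c \*: (@idfun R)) (c *: 1) by apply: is_deriveZ.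
have h3 (t : R) : is_derive t (1:R) ((s * e / 2) \*: ((@idfun R) * (@idfun R)))
     ((s * e / 2) *: (t *: 1 + t *: 1)).
  by apply: is_deriveZ; apply: is_deriveM.
have D (t : R) := is_deriveB (is_deriveB (line_is_derive y d t) (h2 t)) (h3 t).
have cont := @derivable_within_continuous _ _ _ `[0, 1]%R (fun t _ => @ex_derive _ _ _ _ _ _ _ (D t)).
have [xi xin Hxi] := MVT ltr01 (fun t _ => D t) cont.
exists xi => //.
move: Hxi; rewrite !fctE /= scale1r scale0r addr0.
set G := dotv d (gF (y + xi *: d)). set F1 := F (y + d). set F0 := F y.
rewrite /GRing.scale /= => Hxi.
apply/eqP; rewrite -subr_eq0; apply/eqP.
rewrite -[RHS](subrr ((G - c * 1 - s * e / 2 * (xi * 1 + xi * 1)) * (1 - 0))).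
rewrite -{1}Hxi. lra.
Qed.


Lemma cs_bound (d w : 'rV[R]_n) (t : R) : 0 < t ->
  dotv w w <= t ^+ 2 * dotv d d ->
  dotv d w <= t * dotv d d /\ - dotv d w <= t * dotv d d.
Proof.
move=> t0 hw.
have h1 := dotvv_ge0 (t *: d - w).
have h2 := dotvv_ge0 (t *: d + w).
rewrite !(dotvBl, dotvDl, dotvBr, dotvDr, dotvZl, dotvZr) (dotvC w d) in h1 h2.
have key : forall a : R, 0 <= t * t * dotv d d - 2 * t * a + dotv w w -> a <= t * dotv d d.
  move=> a ha.
  have : 2 * t * a <= 2 * t * (t * dotv d d) by rewrite expr2 in hw; lra.
  by rewrite ler_pM2l // mulr_gt0.
split; apply: key; lra.
Qed.

Hypothesis hs : one_smooth gF.

Lemma lip_sq (x y : 'rV[R]_n) :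
  dotv (gF x - gF y) (gF x - gF y) <= dotv (x - y) (x - y).
Proof.
rewrite -!enorm_sq; apply: lerXn2r; last exact: hs.
  by rewrite nnegrE /enorm sqrtr_ge0.
by rewrite nnegrE /enorm sqrtr_ge0.
Qed.

Lemma taylor_up (y d : 'rV[R]_n) :
  F (y + d) <= F y + dotv d (gF y) + dotv d d / 2.
Proof.
have [xi xin H] := mvt_phi y d 1.
have xi0 : 0 < xi by rewrite (itvP xin).
have hw : dotv (gF (y + xi *: d) - gF y) (gF (y + xi *: d) - gF y) <= xi ^+ 2 * dotv d d.
  apply: le_trans (lip_sq _ _) _.
  by rewrite addrC addKr dotvZl dotvZr mulrA expr2.
have [c1 _] := cs_bound _ _ _ xi0 hw.
rewrite dotvBr in c1.
lra.
Qed.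

Lemma taylor_low (y d : 'rV[R]_n) :
  F y + dotv d (gF y) - dotv d d / 2 <= F (y + d).
Proof.
have [xi xin H] := mvt_phi y d (-1).
have xi0 : 0 < xi by rewrite (itvP xin).
have hw : dotv (gF (y + xi *: d) - gF y) (gF (y + xi *: d) - gF y) <= xi ^+ 2 * dotv d d.
  apply: le_trans (lip_sq _ _) _.
  by rewrite addrC addKr dotvZl dotvZr mulrA expr2.
have [_ c2] := cs_bound _ _ _ xi0 hw.
rewrite dotvBr in c2.
lra.
Qed.


Lemma grad_min (xs : 'rV[R]_n) : (forall y, F xs <= F y) -> gF xs = 0.
Proof.
move=> hmin.
have h1 := taylor_up xs (- gF xs).
have h2 := hmin (xs - gF xs).
rewrite dotvNl dotvNr dotvNl opprK in h1.
have h3 := dotvv_ge0 (gF xs).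
apply: dotvv_eq0; lra.
Qed.

Hypothesis hc : convex_fun F.

Lemma grad_ineq (y z : 'rV[R]_n) : F y + dotv (z - y) (gF y) <= F z.
Proof.
set d := z - y; set c := dotv d (gF y); set e := dotv d d.
have e0 : 0 <= e := dotvv_ge0 d.
apply/ler_addgt0Pr => eps eps0.
set t := eps / (eps + e).
have epe : 0 < eps + e by lra.
have t0 : 0 < t by rewrite /t divr_gt0.
have t1 : t <= 1 by rewrite /t ler_pdivrMr // mul1r; lra.
have hc1 : F ((1 - t) *: y + t *: z) <= (1 - t) * F y + t * F z.
  by apply: hc; rewrite (ltW t0) t1.
have E : (1 - t) *: y + t *: z = y + t *: d.
  by rewrite /d scalerBr scalerBl scale1r addrAC addrA.
rewrite E in hc1.
have hlow := taylor_low y (t *: d).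
rewrite dotvZl dotvZl dotvZr -/c -/e in hlow.
have key : t * (c - t * e / 2) <= t * (F z - F y).
  have : F y + t * c - t * (t * e) / 2 <= (1 - t) * F y + t * F z.
    exact: le_trans hlow hc1.
  lra.
rewrite ler_pM2l // in key.
have te : t * e <= eps.
  rewrite /t mulrAC ler_pdivrMr //.
  nra.
lra.
Qed.

Definition Qc (x y : 'rV[R]_n) : R :=
  F x - F y - dotv (gF y) (x - y) - dotv (gF x - gF y) (gF x - gF y) / 2.

Lemma Qc_ge0 (x y : 'rV[R]_n) : 0 <= Qc x y.
Proof.
rewrite /Qc.
set w := gF x - gF y.
have Ew : dotv w w = dotv w (gF x) - dotv w (gF y) by rewrite {2}/w dotvBr.
have h1 := grad_ineq y (x - w).
have h2 := taylor_up x (- w).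
clearbody w.
rewrite !(dotvBl, dotvNl, dotvNr, opprK) in h1 h2.
rewrite !dotvBr (dotvC (gF y) x) (dotvC (gF y) y).
lra.
Qed.

End Analytic.
Arguments Qc {R n}.

Section Run.
Variables (R : realType) (n : nat) (F : 'rV[R]_n -> R) (gF : 'rV[R]_n -> 'rV[R]_n).
Local Notation it h x0 i := (gd_iter gF h x0 i).
Local Notation Q := (@Qc R n F gF).

Definition alphaj (h : seq R) j : R := \sum_(0 <= i < j) h`_i.
Definition sFj h x0 j : R := \sum_(0 <= i < j) h`_i * F (it h x0 i).
Definition sG1j h x0 j : R :=
  \sum_(0 <= i < j) h`_i * dotv (gF (it h x0 i)) (gF (it h x0 i)).
Definition sG2j h x0 j : R :=
  \sum_(0 <= i < j) h`_i ^+ 2 * dotv (gF (it h x0 i)) (gF (it h x0 i)).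
Definition starj h x0 z j : R := \sum_(0 <= i < j) h`_i * Q z (it h x0 i).

Lemma it_succ h x0 i : it h x0 i.+1 = it h x0 i - h`_i *: gF (it h x0 i).
Proof. by []. Qed.

Lemma star_formula h x0 z j :
  starj h x0 z j = alphaj h j * F z - sFj h x0 j
   + (dotv x0 x0 - dotv (it h x0 j) (it h x0 j) + sG2j h x0 j) / 2
   - dotv (x0 - it h x0 j) z
   - (alphaj h j * dotv (gF z) (gF z) - 2 * dotv (gF z) (x0 - it h x0 j)
      + sG1j h x0 j) / 2.
Proof.
elim: j => [|j IH].
  rewrite /starj /alphaj /sFj /sG1j /sG2j !big_geq //= !subrr dotv0l dotv0r.
  by rewrite mul0r; lra.
rewrite /starj /alphaj /sFj /sG1j /sG2j !big_nat_recr //=.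
rewrite -/(starj h x0 z j) -/(alphaj h j) -/(sFj h x0 j) -/(sG1j h x0 j) -/(sG2j h x0 j).
rewrite IH /Qc.
set xj := it h x0 j; set gj := gF xj; set hj := h`_j.
rewrite !(dotvBl, dotvBr, dotvZl, dotvZr, dotvNl, dotvNr).
rewrite ?(dotvC gj xj) ?(dotvC gj z) ?(dotvC xj z) ?(dotvC gj x0) ?(dotvC (gF z) gj) ?(dotvC z x0) ?(dotvC xj x0) ?(dotvC (gF z) xj) ?(dotvC (gF z) x0).
lra.
Qed.


Lemma it_cat1 a b x0 i : (i <= size a)%N -> it (a ++ b) x0 i = it a x0 i.
Proof.
elim: i => [//|i IH] hi /=.
rewrite IH ?(ltnW hi) // nth_cat hi; done.
Qed.

Lemma it_cat2 a b x0 i :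
  it (a ++ b) x0 (size a + i) = it b (it a x0 (size a)) i.
Proof.
elim: i => [|i IH]; first by rewrite addn0 it_cat1.
rewrite addnS /= IH nth_cat ltnNge leq_addr /= addKn; done.
Qed.

Lemma sum_cat (phi : R -> 'rV[R]_n -> R) a b x0 :
  \sum_(0 <= i < size (a ++ b)) phi (a ++ b)`_i (it (a ++ b) x0 i)
  = \sum_(0 <= i < size a) phi a`_i (it a x0 i)
    + \sum_(0 <= i < size b) phi b`_i (it b (it a x0 (size a)) i).
Proof.
rewrite size_cat (@big_cat_nat _ _ _ (size a)) ?leq_addr //=.
congr (_ + _).
  apply: eq_big_nat => i /andP[_ hi].
  by rewrite nth_cat hi it_cat1 // ltnW.
rewrite -{1}(add0n (size a)) big_addn addKn.
apply: eq_big_nat => i _.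
by rewrite addnC nth_cat ltnNge leq_addr /= addKn it_cat2.
Qed.

Lemma it_cons m b x0 i : it (m :: b) x0 i.+1 = it b (x0 - m *: gF x0) i.
Proof.
elim: i => [//|i IH].
by rewrite it_succ IH [in RHS]it_succ.
Qed.

Lemma sum_cons (phi : R -> 'rV[R]_n -> R) m b x0 :
  \sum_(0 <= i < size (m :: b)) phi (m :: b)`_i (it (m :: b) x0 i)
  = phi m x0 + \sum_(0 <= i < size b) phi b`_i (it b (x0 - m *: gF x0) i).
Proof.
rewrite /= big_nat_recl //=; congr (_ + _).
by apply: eq_big_nat => i _; rewrite -it_cons.
Qed.


Definition alpha h := alphaj h (size h).
Definition sF h x0 := sFj h x0 (size h).
Definition sG1 h x0 := sG1j h x0 (size h).
Definition sG2 h x0 := sG2j h x0 (size h).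
Definition xl h x0 := it h x0 (size h).
Definition star h x0 z := starj h x0 z (size h).
Definition Dexpr h x0 := sF h x0 - alpha h * F (xl h x0)
  - (sG2 h x0 - sG1 h x0) / 2
  - alpha h * (alpha h + 1) / 2 * dotv (gF (xl h x0)) (gF (xl h x0)).

Section Cat.
Variables (a b : seq R) (m : R) (x0 : 'rV[R]_n).
Local Notation xm := (xl a x0).
Local Notation y := (xl a x0 - m *: gF (xl a x0)).

Lemma alpha_cat : alpha (a ++ m :: b) = alpha a + (m + alpha b).
Proof.
rewrite /alpha /alphaj.
have := sum_cat (fun t _ => t) a (m :: b) x0; rewrite /= => ->.
have := sum_cons (fun t _ => t) m b (it a x0 (size a)); rewrite /= => ->.
done.
Qed.

Lemma sF_cat : sF (a ++ m :: b) x0 = sF a x0 + (m * F xm + sF b y).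
Proof.
rewrite /sF /sFj.
have := sum_cat (fun t x => t * F x) a (m :: b) x0; rewrite /= => ->.
have := sum_cons (fun t x => t * F x) m b (it a x0 (size a)); rewrite /= => ->.
done.
Qed.

Lemma sG1_cat : sG1 (a ++ m :: b) x0 = sG1 a x0
   + (m * dotv (gF xm) (gF xm) + sG1 b y).
Proof.
rewrite /sG1 /sG1j.
have := sum_cat (fun t x => t * dotv (gF x) (gF x)) a (m :: b) x0; rewrite /= => ->.
have := sum_cons (fun t x => t * dotv (gF x) (gF x)) m b (it a x0 (size a)); rewrite /= => ->.
done.
Qed.

Lemma sG2_cat : sG2 (a ++ m :: b) x0 = sG2 a x0
   + (m ^+ 2 * dotv (gF xm) (gF xm) + sG2 b y).
Proof.
rewrite /sG2 /sG2j.
have := sum_cat (fun t x => t ^+ 2 * dotv (gF x) (gF x)) a (m :: b) x0; rewrite /= => ->.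
have := sum_cons (fun t x => t ^+ 2 * dotv (gF x) (gF x)) m b (it a x0 (size a)); rewrite /= => ->.
done.
Qed.

Lemma xl_cat : xl (a ++ m :: b) x0 = xl b y.
Proof.
by rewrite /xl size_cat [size (m :: b)]/= it_cat2 it_cons.
Qed.

End Cat.

Lemma step_identity (a b : seq R) (m rho r : R) (x0 : 'rV[R]_n) :
  rho * rho = 2 * rho + 1 -> alpha a = r - 1 -> alpha b = r - 1 ->
  m = 1 + r * (rho - 2) ->
  let xm := xl a x0 in let y := xm - m *: gF xm in let xn := xl b y in
  Dexpr (a ++ m :: b) x0 = Dexpr a x0 + rho * rho * Dexpr b y
    + rho * (star b y xm + star b y xn) + rho * Q xm xn + r * Q xn xm.
Proof.
move=> hr ha hb hm xm y xn.
have E1 := alpha_cat a b m x0; have E2 := sF_cat a b m x0; have E3 := sG1_cat a b m x0; have E4 := sG2_cat a b m x0; have E5 := xl_cat a b m x0.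
rewrite /Dexpr. rewrite E1. rewrite E2. rewrite E3. rewrite E4. rewrite E5. rewrite -/xm -/y -/xn.
rewrite /star !star_formula -/(alpha b) -/(sF b y) -/(sG1 b y) -/(sG2 b y) -/(xl b y) -/xn.
rewrite ha hb /Qc /y.
set gm := gF xm; set gn := gF xn.
set SFa := sF a x0; set SFb := sF b y; set G1a := sG1 a x0; set G2a := sG2 a x0.
set G1b := sG1 b y; set G2b := sG2 b y.
rewrite !(dotvBl, dotvBr, dotvZl, dotvZr, dotvDl, dotvDr, dotvNl, dotvNr).
rewrite ?(dotvC gm xm) ?(dotvC xn xm) ?(dotvC gn xm) ?(dotvC xn gm) ?(dotvC gn gm) ?(dotvC gn xn).
rewrite hm.
clear E1 E2 E3 E4 E5.
clearbody SFa SFb G1a G2a G1b G2b gm gn xn y xm.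
have h0 : rho * rho - 2 * rho - 1 = 0 by rewrite hr; lra.
pose q := 3/2 * dotv gm gm * r^+2 - SFb + F xn * r - F xn + 1/2 * G2b - 1/2 * G1b
  - 1/2 * dotv gn gn * r - dotv gm gm * r^+2 * rho + dotv xm gm * r - dotv gm gm * r
  - dotv gm xn * r + dotv gm gn * r.
have E : forall t : R, t = t + q * (rho * rho - 2 * rho - 1).
  by move=> t; rewrite h0 mulr0 addr0.
rewrite [RHS]E /q.
lra.
Qed.

End Run.
Arguments alphaj {R}. Arguments alpha {R}.
Arguments sFj {R n}. Arguments sG1j {R n}. Arguments sG2j {R n}. Arguments starj {R n}. Arguments sF {R n}. Arguments sG1 {R n}. Arguments sG2 {R n}. Arguments xl {R n}. Arguments star {R n}. Arguments Dexpr {R n}. Arguments step_identity {R n}. Arguments star_formula {R n}.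

Section Silver.
Variable R : realType.
Local Notation rho := (@silver_ratio R).

Lemma sqrt2_sq : Num.sqrt (2 : R) * Num.sqrt 2 = 2.
Proof. by rewrite -expr2 sqr_sqrtr // ler0n. Qed.

Lemma sqrt2_ge1 : 1 <= Num.sqrt (2 : R).
Proof. have := sqrt2_sq; have := sqrtr_ge0 (2:R); nra. Qed.

Lemma rho_sq : rho * rho = 2 * rho + 1.
Proof. rewrite /silver_ratio; have := sqrt2_sq; lra. Qed.

Lemma rho_gt0 : 0 < rho.
Proof. rewrite /silver_ratio; have := sqrt2_ge1; lra. Qed.

Lemma rho_shift k : rho ^+ k = rho ^+ k.+1 * (rho - 2).
Proof.
have h : rho * (rho - 2) = 1 by rewrite mulrBr rho_sq; lra.
by rewrite exprS -mulrA (mulrC (rho ^+ k)) mulrA h mul1r.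
Qed.

Lemma silver_rec k : silver_schedule k.+1
  = silver_schedule k ++ (1 + rho ^+ k * (rho - 2)) :: silver_schedule k :> seq R.
Proof.
case: k => [|k].
  rewrite /= expr0 mul1r; congr [:: _]; rewrite /silver_ratio; lra.
have -> : silver_schedule k.+2 = silver_schedule k.+1 ++ (1 + rho ^+ k) :: silver_schedule k.+1 :> seq R by [].
by rewrite -rho_shift.
Qed.

Lemma silver_size k : size (silver_schedule k : seq R) = (2 ^ k - 1)%N.
Proof.
elim: k => [//|k IH].
rewrite silver_rec size_cat /= IH expnS.
have := expn_gt0 2 k; lia.
Qed.

Lemma alpha_seq (h : seq R) : alpha h = \sum_(t <- h) t.
Proof. rewrite /alpha /alphaj [RHS](big_nth 0). done. Qed.

Lemma silver_alpha k : alpha (silver_schedule k : seq R) = rho ^+ k - 1.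
Proof.
elim: k => [|k IH]; first by rewrite alpha_seq big_nil expr0 subrr.
rewrite silver_rec alpha_seq big_cat big_cons /= -!alpha_seq IH.
rewrite exprS; lra.
Qed.

Lemma silver_pos k : all (fun t => 0 <= t) (silver_schedule k : seq R).
Proof.
elim: k => [//|k IH].
rewrite silver_rec all_cat IH /= IH andbT.
have : 0 <= rho ^+ k by rewrite exprn_ge0 // ltW // rho_gt0.
rewrite /silver_ratio; have := sqrt2_ge1 => h1 h2.
have : 0 <= rho ^+ k * (rho - 2) by rewrite mulr_ge0 // /silver_ratio; lra.
rewrite /silver_ratio; lra.
Qed.

End Silver.

Section Final.
Variables (R : realType) (n : nat) (F : 'rV[R]_n -> R) (gF : 'rV[R]_n -> 'rV[R]_n).
Local Notation Q := (Qc F gF).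
Local Notation rho := (@silver_ratio R).
Hypothesis HQ : forall x y, 0 <= Q x y.

Lemma nth_ge0 (h : seq R) i : all (fun t => 0 <= t) h -> 0 <= h`_i.
Proof.
move=> /allP H; case: (ltnP i (size h)) => hi.
  exact: H (mem_nth 0 hi).
by rewrite nth_default.
Qed.

Lemma star_ge0 (h : seq R) x0 z : all (fun t => 0 <= t) h -> 0 <= star F gF h x0 z.
Proof.
move=> hp; rewrite /star /starj; apply: sumr_ge0 => i _.
by rewrite mulr_ge0 // nth_ge0.
Qed.

Lemma D_silver k x0 : 0 <= Dexpr F gF (silver_schedule k) x0.
Proof.
elim: k x0 => [|k IH] x0.
  rewrite /Dexpr /sF /sFj /sG1 /sG1j /sG2 /sG2j /alpha /alphaj !big_geq //=.
  lra.
have rk : 0 <= rho ^+ k by rewrite exprn_ge0 // ltW // rho_gt0.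
have r0 : 0 <= rho by rewrite ltW // rho_gt0.
rewrite silver_rec.
have := step_identity F gF (silver_schedule k) (silver_schedule k)
  (1 + rho ^+ k * (rho - 2)) rho (rho ^+ k) x0 (@rho_sq R) (silver_alpha R k)
  (silver_alpha R k) erefl.
move=> /= ->.
have hp := silver_pos R k.
apply: addr_ge0; last exact: mulr_ge0 rk (HQ _ _).
apply: addr_ge0; last exact: mulr_ge0 r0 (HQ _ _).
apply: addr_ge0; last by apply: mulr_ge0 => //; apply: addr_ge0; apply: star_ge0.
apply: addr_ge0; first exact: IH.
apply: mulr_ge0; [exact: mulr_ge0 | exact: IH].
Qed.


Lemma alpha_ge0 (h : seq R) : all (fun t => 0 <= t) h -> 0 <= alpha h.
Proof. by move=> hp; rewrite /alpha /alphaj; apply: sumr_ge0 => i _; exact: nth_ge0. Qed.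

Lemma final_ineq (h : seq R) x0 xs : gF xs = 0 -> 0 <= Dexpr F gF h x0 ->
  all (fun t => 0 <= t) h ->
  (2 * alpha h + 1) * (F (xl gF h x0) - F xs) <= dotv (x0 - xs) (x0 - xs) / 2.
Proof.
move=> g0 hD hp.
have S := star_ge0 h x0 xs hp.
rewrite /star star_formula -/(alpha h) -/(sF F gF h x0) -/(sG1 gF h x0) -/(sG2 gF h x0) -/(xl gF h x0) in S.
have A0 := alpha_ge0 h hp.
have Qs : 0 <= (alpha h + 1) * Q xs (xl gF h x0).
  by apply: mulr_ge0; [lra | exact: HQ].
set xn := xl gF h x0 in S Qs hD *.
have sq := dotvv_ge0 (xn - xs - (alpha h + 1) *: gF xn).
rewrite /Dexpr -/xn in hD.
rewrite /Qc g0 in Qs.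
rewrite g0 in S.
set gn := gF xn in S Qs hD sq *.
set A := alpha h in S Qs hD sq *.
set SF := sF F gF h x0 in S hD. set G1 := sG1 gF h x0 in S hD. set G2 := sG2 gF h x0 in S hD.
clearbody SF G1 G2 A gn xn.
rewrite !(dotvBl, dotvBr, dotvZl, dotvZr, dotvDl, dotvDr, dotvNl, dotvNr, dotv0l, dotv0r, subr0, sub0r) in S Qs sq *.
rewrite ?(dotvC xs x0) ?(dotvC xn x0) ?(dotvC gn x0) ?(dotvC xn xs) ?(dotvC gn xs) ?(dotvC gn xn) in S Qs sq *.
lra.
Qed.

End Final.

Theorem theorem4 (R : realType) (n : nat) (F : 'rV[R]_n -> R)
  (gF : 'rV[R]_n -> 'rV[R]_n) (xstar x0 : 'rV[R]_n) (k : nat) :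
  has_gradient F gF -> convex_fun F -> one_smooth gF ->
  (forall y, F xstar <= F y) ->
  (1 <= k)%N ->
  F (gd_iter gF (silver_schedule k) x0 (2 ^ k - 1)%N) - F xstar
    <= (4 * silver_ratio ^+ k - 2)^-1 * enorm (x0 - xstar) ^+ 2.
Proof.
move=> hg hc hs hmin _.
have HQ : forall x y, 0 <= Qc F gF x y := @Qc_ge0 R n F gF hg hs hc.
have g0 := @grad_min R n F gF hg hs xstar hmin.
rewrite -(silver_size R k) -/(xl gF (silver_schedule k) x0).
have := @final_ineq R n F gF HQ (silver_schedule k) x0 xstar g0 (@D_silver R n F gF HQ k x0) (silver_pos R k).
rewrite silver_alpha enorm_sq => H.
have r1 : 1 <= (@silver_ratio R) ^+ k.
  apply: exprn_ege1; rewrite /silver_ratio; have := sqrt2_ge1 R; lra.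
rewrite ler_pdivlMl; last lra.
lra.
Qed.
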